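(* Let $\ell,n$ be positive integers with $2^\ell\le n$. If $A\subseteq\mathbb{Z}_{2^n}$ has size $|A|>\left(1-\frac{1}{2^\ell-1}\right)2^n$, then there exists $x\in\mathbb{Z}_{2^n}$ such that $\{x,2x,3x,\dots,(2^\ell-1)x\}\subseteq A$.
   Context: Arithmetic is in $\mathbb{Z}_{2^n}$. *)

(* Defs.v *)
From mathcomp Require Import all_boot all_order all_algebra.
Set Implicit Arguments. Unset Strict Implicit. Unset Printing Implicit Defensive.

(* Main.v *)
Require Import Defs.
From mathcomp Require Import all_boot all_order all_algebra.
From mathcomp Require Import zify ring.
Import Order.TTheory GRing.Theory Num.Theory.

Definition bad (n l : nat) (B : nat -> bool) (x : nat) : nat :=
  \sum_(k < 2^l) (0 < k) * B ((k * x) %% 2^n).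
Definition Slev (n : nat) (B : nat -> bool) (a : nat) : nat :=
  \sum_(r < 2^(n-a)) odd r * B (2^a * r).

Lemma pair_sum (F : nat -> nat) N :
  \sum_(i < 2 * N) F i = \sum_(i < N) (F (2*i) + F (2*i).+1).
Proof.
elim: N => [|N IH]; first by rewrite muln0 !big_ord0.
rewrite (_ : 2 * N.+1 = (2*N).+2); last by lia.
by rewrite !big_ord_recr /= IH addnA.
Qed.

Lemma half_sum (h : nat -> nat) N : ~~ odd N ->
  \sum_(x < N + N) odd x * h (x %% N) = 2 * \sum_(x < N) odd x * h x.
Proof.
move=> hN; rewrite big_split_ord /= mul2n -addnn; congr (_ + _).
  by apply: eq_bigr => i _; rewrite modn_small.
apply: eq_bigr => i _; rewrite modnDl modn_small // oddD.
by rewrite (negbTE hN).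
Qed.

Lemma perm_sum n k (B : nat -> bool) : 0 < n -> odd k ->
  \sum_(x < 2^n) odd x * B ((k*x) %% 2^n) = \sum_(x < 2^n) odd x * B x.
Proof.
move=> hn hk.
have h0 : 0 < 2^n by rewrite expn_gt0.
pose h (x : 'I_(2^n)) : 'I_(2^n) := Ordinal (ltn_pmod (k*x) h0).
have cop : coprime (2^n) k by rewrite coprime_pexpl // coprime2n.
have key : forall x y : 'I_(2^n), y <= x -> (k*x) %% 2^n = (k*y) %% 2^n ->
    val x = val y.
  move=> x y lyx E.
  have : 2^n %| k*x - k*y.
    by rewrite -eqn_mod_dvd ?leq_mul2l ?lyx ?orbT // E.
  rewrite -mulnBr Gauss_dvdr // => /dvdn_leq.
  have : x < 2^n by [].
  case: (ltnP y x) => H; last by move=> _ _; apply/eqP; rewrite eqn_leq H lyx.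
  move=> hx /(_ _); rewrite subn_gt0 => /(_ H); lia.
have inj : injective h.
  move=> x y /(congr1 val) /= E; apply/val_inj.
  case: (leqP y x) => H; first exact: key.
  by symmetry; apply: key; [exact: ltnW | symmetry].
rewrite [RHS](reindex_inj inj) /=; apply: eq_bigr => x _.
rewrite odd_mod; last by rewrite oddX; move: hn; case: (n) => [//|n0] _.
by rewrite oddM hk.
Qed.

Lemma G l : forall n B, l <= n ->
  2 * \sum_(x < 2^n) odd x * bad n l B x = 2^l * \sum_(a < l) Slev n B a.
Proof.
elim: l => [|l IH] n B hn.
  rewrite big_ord0 muln0 big1 ?muln0 // => x _.
  by rewrite /bad big_ord1 /= muln0.
case: n hn => [//|n] hn.
have E1 : forall x : nat, bad n.+1 l.+1 B x =
   bad n l (fun w => B (2*w)) (x %% 2^n) +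
   \sum_(k < 2^l) B (((2*k).+1 * x) %% 2^n.+1).
  move=> x; rewrite /bad expnS (pair_sum (fun k => (0<k) * B ((k*x) %% 2^n.+1))) big_split /=; congr (_ + _); last first.
    by apply: eq_bigr => k _; rewrite mul1n.
  apply: eq_bigr => k _; rewrite muln_gt0 /= expnS -mulnA -muln_modr.
  by rewrite modnMmr.
under eq_bigr do rewrite E1 mulnDr.
rewrite big_split /= mulnDr.
have Od : \sum_(i < 2^n.+1) odd i * \sum_(k < 2^l) B (((2*k).+1 * i) %% 2^n.+1)
   = 2^l * Slev n.+1 B 0.
  under eq_bigr do rewrite big_distrr.
  rewrite exchange_big /=.
  rewrite (eq_bigr (fun _ => \sum_(i < 2^n.+1) odd i * B i)); last first.
    by move=> k _; rewrite perm_sum // oddS oddM.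
  rewrite sum_nat_const card_ord /Slev subn0; congr (_ * _).
  by apply: eq_bigr => i _; rewrite expn0 mul1n.
rewrite Od big_ord_recl [RHS]mulnDr [in RHS]addnC; congr (_ + _); last first.
  by rewrite expnS mulnA.

case: l IH hn E1 Od => [|l] IH hn E1 Od.
  rewrite big_ord0 muln0 big1 ?muln0 // => x _.
  by rewrite /bad big_ord1 /= muln0.
have e2 : 2 * 2^n = 2^n + 2^n by rewrite addnn mul2n.
rewrite (expnS 2 n) e2 (half_sum (bad n l.+1 (fun w => B (2*w)))); last first.
  by rewrite oddX; move: hn; case: (n) => [|n0] // _.
rewrite IH; last by lia.
rewrite [in RHS]expnS -mulnA; congr (_ * (_ * _)).
apply: eq_bigr => a _; rewrite /Slev subSS; apply: eq_bigr => r _.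
by rewrite expnS mulnA.
Qed.

Lemma decomp l n (B : nat -> bool) : l <= n ->
  \sum_(y < 2^n) B y = \sum_(a < l) Slev n B a + \sum_(y < 2^(n-l)) B (2^l * y).
Proof.
elim: l => [|l IH] hn.
  by rewrite big_ord0 add0n subn0; apply: eq_bigr => i _; rewrite mul1n.
rewrite IH; last by lia.
rewrite big_ord_recr /= -addnA; congr (_ + _).
have e : 2^(n-l) = 2 * 2^(n - l.+1) by rewrite -expnS; congr (_ ^ _); lia.
rewrite /Slev e (pair_sum (fun y => B (2^l * y))) (pair_sum (fun r => odd r * B (2^l * r))).
rewrite -big_split /=; apply: eq_bigr => i _.
rewrite oddM /= mul1n mul0n add0n addnC; congr (_ + _).
by rewrite expnS mulnCA mulnA.
Qed.

Lemma sum_odd n : 0 < n -> \sum_(x < 2^n) odd x = 2^(n-1).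
Proof.
move=> hn; have e : 2^n = 2 * 2^(n-1) by rewrite -expnS; congr (_ ^ _); lia.
rewrite e (pair_sum (fun x => nat_of_bool (odd x))).
rewrite (eq_bigr (fun _ => 1)); last by move=> i _; rewrite oddS oddM.
by rewrite sum_nat_const card_ord muln1.
Qed.

Lemma mainN l (hl : 0 < l) n : forall B : nat -> bool,
  (2^l - 1) * \sum_(y < 2^n) B y < 2^n ->
  exists x, forall k, 0 < k -> k < 2^l -> ~~ B ((k*x) %% 2^n).
Proof.
elim/ltn_ind: n => n IHn B hB.
have h0 : 0 < 2^n by rewrite expn_gt0.
have hM : 2 <= 2^l by rewrite -{1}(expn1 2) leq_exp2l.
case: (ltnP n l) => hnl.
  have h1 : 2^n <= 2^l - 1.
    have : 2^n < 2^l by rewrite ltn_exp2l.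
    lia.
  have hB0 : B 0 <= \sum_(y < 2^n) B y.
    by rewrite (bigD1 (Ordinal h0)) //= leq_addr.
  exists 0 => k _ _; rewrite muln0 mod0n.
  apply/negP => b0; rewrite b0 in hB0.
  have : (2^l - 1) * 1 <= (2^l - 1) * \sum_(y < 2^n) B y by rewrite leq_mul2l hB0 orbT.
  lia.
case: (boolP [exists x : 'I_(2^n), odd x && (bad n l B x == 0)]).
  move=> /existsP [x /andP [_ /eqP hx]].
  exists x => k k0 kl; move: hx; rewrite /bad => /eqP; rewrite sum_nat_eq0.
  move=> /forallP /(_ (Ordinal kl)) /=; rewrite k0 mul1n.
  by case: (B _).
move=> /existsPn hall.
have hsum : 2^(n-1) <= \sum_(x < 2^n) odd x * bad n l B x.
  rewrite -sum_odd; last by lia.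
  apply: leq_sum => x _; move: (hall x).
  by case: (odd x) => //=; rewrite mul1n lt0n.
have L1 : 2^n <= 2^l * \sum_(a < l) Slev n B a.
  rewrite -G //.
  have e : 2^n = 2 * 2^(n-1) by rewrite -expnS; congr (_ ^ _); lia.
  by rewrite {1}e leq_mul2l hsum orbT.
have eN : 2^n = 2^l * 2^(n-l) by rewrite -expnD subnKC.
rewrite eN leq_pmul2l ?expn_gt0 // in L1.
rewrite (decomp l n B hnl) eN in hB.
set L := \sum_(a < l) _ in L1 hB.
set C' := \sum_(y < _) _ in hB.
set M := 2^l in hB hM.
set P := 2^(n-l) in L1 hB.
have hC : (M - 1) * C' < P.
  have : (M - 1) * P <= (M - 1) * L by rewrite leq_mul2l L1 orbT.
  rewrite mulnDr in hB.
  have : M * P = (M - 1) * P + P by rewrite mulnBl mul1n subnK // leq_pmull //; lia.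
  lia.
have [x' hx'] := IHn (n - l) ltac:(lia) (fun w => B (2^l * w)) hC.
exists (2^l * x') => k k0 kl.
rewrite eN mulnCA -muln_modr.
exact: hx'.
Qed.

Theorem claim2p2 (l n : nat) (hl : (0 < l)%N) (hn : (0 < n)%N)
    (hln : (2 ^ l <= n)%N) (A : {set 'Z_(2 ^ n)})
    (hA : ((1 - 1 / ((2 ^ l - 1)%N)%:R) * ((2 ^ n)%N)%:R < (#|A|)%:R :> rat)%R) :
  exists x : 'Z_(2 ^ n), forall k : nat, (1 <= k <= 2 ^ l - 1)%N -> (x *+ k)%R \in A.
Proof.
have hM : 2 <= 2^l by rewrite -{1}(expn1 2) leq_exp2l.
have hp : 1 < 2^n by rewrite -{1}(expn0 2) ltn_exp2l.
have hm : 0 < 2^l - 1 by lia.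
have cardT : #|A| + #|~: A| = 2^n by rewrite cardsC card_ord Zp_cast.
have H1 : (((2^l - 1)%N%:R - 1) * (2^n)%N%:R < (2^l-1)%N%:R * (#|A|)%:R :> rat)%R.
  have -> : (((2^l - 1)%N%:R - 1) * (2^n)%N%:R =
      (2^l-1)%N%:R * ((1 - 1/(2^l-1)%N%:R) * (2^n)%N%:R) :> rat)%R.
    by field; rewrite pnatr_eq0 -lt0n.
  by rewrite ltr_pM2l // ltr0n.
have H2 : ((2^l - 1 - 1) * 2^n < (2^l - 1) * #|A|)%N.
  by rewrite -(ltr_nat rat) natrM natrB // natrM.
have hB : ((2^l - 1) * #|~: A| < 2^n)%N.
  have e1 : (2^l - 1) * 2^n = (2^l - 1 - 1) * 2^n + 2^n.
    by rewrite -[X in _ + X](mul1n (2^n)) -mulnDl subnK.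
  have e2 : (2^l - 1) * #|A| + (2^l - 1) * #|~: A| = (2^l - 1) * 2^n.
    by rewrite -mulnDr cardT.
  lia.
pose B := fun y : nat => (inZp y : 'Z_(2^n)) \notin A.
have hS : \sum_(y < 2^n) B y = #|~: A|.
  move: (Zp_cast hp) => e.
  rewrite -sum1_card [RHS]big_mkcond /=.
  rewrite -[in LHS]e; apply: eq_bigr => y _.
  by rewrite /B valZpK in_setC; case: (y \in A).
have [x hx] := @mainN l hl n B ltac:(by rewrite hS).
exists (inZp x) => k /andP [k1 k2].
have := hx k k1 ltac:(lia).
rewrite /B negbK Zp_mulrn.
congr (_ \in A); apply: val_inj => /=.
by rewrite Zp_cast // modnMml mulnC modn_mod.
Qed.
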